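(* Let $y$ be a non-empty word of length $n$ over a totally ordered alphabet. Algorithm LyndonSuffixTable (described in the context) terminates and returns the Lyndon suffix table of $y$, i.e. for every $j\in\{0,\dots,n-1\}$ its output satisfies $\mathrm{lyns}[j]=$ the length of the longest suffix of $y[0\,..\,j]$ that is a Lyndon word. It runs in time $O(n)$ and accesses letters of $y$ only through letter comparisons.
   Context: Lexicographic order $<$: $u<v$ if $u$ is a proper prefix of $v$, or $u=ras$, $v=rbt$ with letters $a<b$. A Lyndon word is a non-empty word strictly smaller than each of its proper non-empty suffixes. $y[i\,..\,j]$ denotes $y[i]\cdots y[j]$. Algorithm LyndonSuffixTable (input: non-empty word $y$ of length $n$): lyns[0] ← 1; per ← 1; h ← 0; i ← 0; j ← 1. While j < n: if y[j] < y[i] then { h ← j − (i − h); lyns[h] ← 1; per ← 1; i ← h; j ← h+1 } else if y[j] > y[i] then { lyns[j] ← j − h + 1; j ← j+1; per ← j − h; i ← h } else { lyns[j] ← lyns[i]; i ← h + ((i − h + 1) mod per); j ← j+1 }. Return lyns. *)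

(* Defs.v *)
From mathcomp Require Import all_boot all_order.
Set Implicit Arguments. Unset Strict Implicit. Unset Printing Implicit Defensive.
Import Order.TTheory.
Local Open Scope order_scope.

Section Words.
Context {disp : Order.disp_t} {T : orderType disp}.

Fixpoint lex_lt (u v : seq T) : bool :=
  match u, v with
  | [::], _ :: _ => true
  | _, [::] => false
  | a :: u', b :: v' => (a < b) || ((a == b) && lex_lt u' v')
  end.

Definition lyndon (w : seq T) : bool :=
  (w != [::]) && all (fun k => lex_lt w (drop k w)) (iota 1 (size w).-1).

Definition longest_lyndon_suffix (x : seq T) : nat :=
  \max_(k < (size x).+1 | lyndon (drop (size x - k) x)) k.

(* The only access to the letters of y: the comparison of y[a] with y[b]. *)
Definition letter_cmp (y : seq T) (a b : nat) : comparison :=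
  match y with
  | [::] => Eq
  | x0 :: _ =>
    if nth x0 y a < nth x0 y b then Lt
    else if nth x0 y a == nth x0 y b then Eq else Gt
  end.
End Words.

Record lst_state := LstState {
  st_lyns : nat -> nat; st_per : nat; st_h : nat; st_i : nat; st_j : nat }.

Definition upd (f : nat -> nat) (x v : nat) : nat -> nat :=
  fun z => if z == x then v else f z.

(* lyns[0] <- 1; per <- 1; h <- 0; i <- 0; j <- 1 (other entries unset, here 0). *)
Definition lst_init : lst_state := LstState (upd (fun _ => 0) 0 1) 1 0 0 1.

(* One iteration of the while-loop body; the algorithm sees the word only
   through the comparison oracle [cmp a b] = comparison of y[a] with y[b]. *)
Definition lst_step (cmp : nat -> nat -> comparison) (s : lst_state) : lst_state :=
  let: LstState lyns per h i j := s in
  match cmp j i with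
  | Lt => let h' := j - (i - h) in
          LstState (upd lyns h' 1) 1 h' h' h'.+1
  | Gt => let lyns' := upd lyns j (j - h + 1) in
          let j' := j.+1 in
          LstState lyns' (j' - h) h h j'
  | Eq => LstState (upd lyns j (lyns i)) per h (h + ((i - h + 1) %% per)) j.+1
  end.

Definition lst_halted (n : nat) (s : lst_state) : bool := n <= st_j s.

Definition lst_iter (cmp : nat -> nat -> comparison) (k : nat) : lst_state :=
  iter k (lst_step cmp) lst_init.

(* Main.v *)
Require Import Defs.
From mathcomp Require Import all_boot all_order.
From mathcomp Require Import zify.
Set Implicit Arguments. Unset Strict Implicit. Unset Printing Implicit Defensive.
Import Order.TTheory.

Lemma lex_witness {d} {T : orderType d} (x0 : T) (u v : seq T) t :
  t <= size u -> t < size v -> (forall s, s < t -> nth x0 u s = nth x0 v s) ->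
  (t = size u \/ (nth x0 u t < nth x0 v t)%O) -> lex_lt u v.
Proof.
elim: u v t => [|a u IH] [|b v] [|t] //=; rewrite ?ltnS => Ht Hv Hag Hor.
- by case: Hor => // ->.
- apply/orP; right; apply/andP; split; first by apply/eqP; apply: (Hag 0).
  apply: (IH v t) => // [s Hs|]; first by apply: (Hag s.+1).
  by case: Hor => [[->]|]; [left|right].
Qed.

Lemma lex_lt_asym {d} {T : orderType d} (u v : seq T) : lex_lt u v -> ~~ lex_lt v u.
Proof.
elim: u v => [|a u IH] [|b v] //=.
case/orP => [Hab|/andP[/eqP-> H]].
- by rewrite lt_gtF //= (gt_eqF Hab).
- by rewrite ltxx eqxx /= IH.
Qed.

Definition sub {d} {T : orderType d} (y : seq T) p m := drop p (take m.+1 y).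

Lemma nth_sub {d} {T : orderType d} (x0 : T) y p m s :
  p + s <= m -> nth x0 (sub y p m) s = nth x0 y (p + s).
Proof. by move=> H; rewrite /sub nth_drop nth_take // ltnS. Qed.

Lemma size_sub {d} {T : orderType d} (y : seq T) p m :
  m < size y -> size (sub y p m) = m.+1 - p.
Proof. by move=> H; rewrite /sub size_drop size_takel. Qed.

Lemma drop_sub {d} {T : orderType d} (y : seq T) p m k :
  drop k (sub y p m) = sub y (p + k) m.
Proof. by rewrite /sub drop_drop addnC. Qed.

Lemma wit_sub {d} {T : orderType d} (x0 : T) y p q m t :
  p <= m -> q <= m -> m < size y ->
  (forall s, s < t -> nth x0 y (q + s) = nth x0 y (p + s)) ->
  ((q + t = m.+1 /\ p < q) \/
   (q + t <= m /\ p + t <= m /\ (nth x0 y (q + t) < nth x0 y (p + t))%O)) ->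
  lex_lt (sub y q m) (sub y p m).
Proof.
move=> Hp Hq Hm Hag Hor; apply: (lex_witness (x0 := x0) (t := t)).
- rewrite size_sub //; case: Hor => [[]|[]]; lia.
- rewrite size_sub //; case: Hor => [[]|[]]; lia.
- move=> s Hs; rewrite !nth_sub ?Hag //; case: Hor => [[]|[]]; lia.
- case: Hor => [[H1 H2]|[H1 [H2 H3]]]; [left|right].
  + rewrite size_sub //; lia.
  + by rewrite !nth_sub.
Qed.

Lemma notlyn_sub {d} {T : orderType d} (y : seq T) p q m :
  p < q -> q <= m -> m < size y -> lex_lt (sub y q m) (sub y p m) ->
  ~~ lyndon (sub y p m).
Proof.
move=> Hpq Hq Hm Hlt; apply/negP => /andP[_ /allP Hall].
have: q - p \in iota 1 (size (sub y p m)).-1.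
  rewrite mem_iota size_sub //; lia.
move/Hall; rewrite drop_sub subnKC ?(ltnW Hpq) // => H.
by move: (lex_lt_asym Hlt); rewrite H.
Qed.

Definition lynidx {d} {T : orderType d} (x0 : T) y a L :=
  forall r, 0 < r -> r < L -> exists t, [/\ t < L - r,
    (forall s, s < t -> nth x0 y (a + r + s) = nth x0 y (a + s)) &
    (nth x0 y (a + t) < nth x0 y (a + r + t))%O].

Lemma lynidx_lyndon {d} {T : orderType d} (x0 : T) y a L :
  lynidx x0 y a L -> 0 < L -> a + L <= size y -> lyndon (sub y a (a + L).-1).
Proof.
move=> HL HL0 Hn; apply/andP; split.
  by rewrite -size_eq0 size_sub; lia.
apply/allP => k; rewrite mem_iota size_sub; last lia.
move=> Hk; rewrite drop_sub.
have [Hk0 HkL] : 0 < k /\ k < L by lia.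
have [t [Ht Hag Hlt]] := HL k Hk0 HkL.
apply: (lex_witness (x0 := x0) (t := t)); rewrite ?size_sub; try lia.
  move=> s Hs; rewrite !nth_sub; try lia. by rewrite Hag.
by right; rewrite !nth_sub; try lia.
Qed.

Lemma lyndon1 {d} {T : orderType d} (w : seq T) : size w = 1 -> lyndon w.
Proof. by case: w => [|a [|]]. Qed.

Lemma lls_eq {d} {T : orderType d} (x : seq T) L :
  L <= size x -> lyndon (drop (size x - L) x) ->
  (forall k, L < k -> k <= size x -> ~~ lyndon (drop (size x - k) x)) ->
  longest_lyndon_suffix x = L.
Proof.
move=> HL Hly Hno; apply/eqP; rewrite eqn_leq; apply/andP; split.
  apply/bigmax_leqP => k Pk; rewrite leqNgt; apply/negP => Hk.
  by move/negP: (Hno k Hk (ltn_ord k)).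
have HL' : L < (size x).+1 by [].
exact: (leq_bigmax_cond (Ordinal HL') Hly).
Qed.

Lemma lls_spec {d} {T : orderType d} (x : seq T) : 0 < size x ->
  exists L, [/\ longest_lyndon_suffix x = L, L <= size x, lyndon (drop (size x - L) x) &
     forall k, L < k -> k <= size x -> ~~ lyndon (drop (size x - k) x)].
Proof.
move=> Hx.
have H1 : 1 < (size x).+1 by [].
have P1 : lyndon (drop (size x - (Ordinal H1)) x).
  by apply: lyndon1; rewrite size_drop /=; lia.
rewrite /longest_lyndon_suffix (bigop.bigmax_eq_arg (Ordinal H1)) //.
case: arg_maxnP => // i Pi Hmax.
exists i; split => //; first by rewrite -ltnS.
move=> k Hk Hkx; apply/negP => Pk.
have Hk' : k < (size x).+1 by [].
by move: (Hmax (Ordinal Hk') Pk) => /= H; lia.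
Qed.

Lemma lls_y_eq {d} {T : orderType d} (y : seq T) m p :
  m < size y -> p <= m -> lyndon (sub y p m) ->
  (forall p', p' < p -> ~~ lyndon (sub y p' m)) ->
  longest_lyndon_suffix (take m.+1 y) = m.+1 - p.
Proof.
move=> Hm Hp Hly Hno; have Hs : size (take m.+1 y) = m.+1 by rewrite size_takel.
apply: lls_eq; rewrite Hs.
- lia.
- by rewrite subKn; [exact: Hly | lia].
- move=> k Hk Hkx; apply: Hno; lia.
Qed.

Lemma lls_y_spec {d} {T : orderType d} (y : seq T) m :
  m < size y -> exists p, [/\ p <= m, lyndon (sub y p m),
    (forall p', p' < p -> ~~ lyndon (sub y p' m)) &
    longest_lyndon_suffix (take m.+1 y) = m.+1 - p].
Proof.
move=> Hm; have Hs : size (take m.+1 y) = m.+1 by rewrite size_takel.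
have Hs0 : 0 < size (take m.+1 y) by rewrite Hs.
have [L [HL HLx Hly Hno]] := lls_spec Hs0.
rewrite Hs in HLx Hly Hno.
have HL0 : 0 < L.
  rewrite lt0n; apply/eqP => E; move: Hly; rewrite E subn0.
  by rewrite -{1}Hs drop_size.
exists (m.+1 - L); split.
- lia.
- exact: Hly.
- move=> p' Hp'; have := Hno (m.+1 - p'); rewrite subKn; last lia.
  apply; lia.
- rewrite HL; lia.
Qed.

Definition perP {d} {T : orderType d} (x0 : T) y h per j :=
  forall q, h <= q -> q + per < j -> nth x0 y (q + per) = nth x0 y q.

Lemma per_exp {d} {T : orderType d} (x0 : T) y h per j :
  perP x0 y h per j -> forall b q, h <= q -> q + b * per < j ->
  nth x0 y (q + b * per) = nth x0 y q.
Proof.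
move=> HP; elim=> [|b IH] q Hq Hj; first by rewrite mul0n addn0.
rewrite mulSn (addnC per) addnA HP; first (apply: IH => //); lia.
Qed.

Lemma nonlyn {d} {T : orderType d} (x0 : T) y h per j a p m :
  0 < per -> perP x0 y h per j -> lynidx x0 y h per ->
  h + a * per <= j -> h <= p -> p < h + a * per ->
  h + a * per <= m -> m < size y ->
  ((m < h + a * per + per /\
     forall s, h + a * per + s <= m -> nth x0 y (h + a * per + s) = nth x0 y (h + s)) \/
   (exists dd, [/\ dd < per, h + a * per + dd <= m,
     (forall s, s < dd -> nth x0 y (h + a * per + s) = nth x0 y (h + s)) &
     (nth x0 y (h + a * per + dd) < nth x0 y (h + dd))%O])) ->
  ~~ lyndon (sub y p m).
Proof.
move=> Hper HP HL Hj Hp Hpa Hm Hn HC.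
set hh := h + a * per in Hj Hpa Hm HC *.
have Hex := per_exp HP.
set r := p - h.
have Hr : r = r %/ per * per + r %% per := divn_eq r per.
set b := r %/ per in Hr. set r0 := r %% per in Hr.
have Hr0 : r0 < per by apply: ltn_pmod.
have Hb : b * per + per <= a * per.
  have : b * per < a * per by lia.
  rewrite ltn_mul2r => /andP[_ Hba].
  by rewrite -mulSnr leq_mul2r Hba orbT.
have F1 : forall x, r0 + x < per -> nth x0 y (p + x) = nth x0 y (h + r0 + x).
  move=> x Hx; have -> : p + x = (h + r0 + x) + b * per by lia.
  apply: Hex; lia.
apply: (notlyn_sub (q := hh)) => //.
case: (posnP r0) => Hr00.
-
  have G : forall x, x < per -> nth x0 y (p + x) = nth x0 y (h + x).
    by move=> x Hx; rewrite F1 Hr00 ?addn0.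
  case: HC => [[Hm1 Hag]|[dd [Hd Hdm Hag Hlt]]].
  + apply: (wit_sub (x0 := x0) (t := m.+1 - hh)); try lia.
    move=> s Hs; rewrite Hag ?G //; lia.
  + apply: (wit_sub (x0 := x0) (t := dd)); try lia.
    * by move=> s Hs; rewrite Hag ?G //; lia.
    * right; split; first lia; split; first lia.
      by rewrite G.
- have [t0 [Ht0 Hag0 Hlt0]] := HL r0 Hr00 Hr0.
  have G : forall x, x < t0 -> nth x0 y (p + x) = nth x0 y (h + x).
    by move=> x Hx; rewrite F1 ?Hag0 //; lia.
  have G0 : (nth x0 y (h + t0) < nth x0 y (p + t0))%O by rewrite F1 //; lia.
  case: HC => [[Hm1 Hag]|[dd [Hd Hdm Hag Hlt]]].
  + case: (leqP (m.+1 - hh) t0) => Hc.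
    * apply: (wit_sub (x0 := x0) (t := m.+1 - hh)); try lia.
      move=> s Hs; rewrite Hag ?G //; lia.
    * apply: (wit_sub (x0 := x0) (t := t0)); try lia.
      -- move=> s Hs; rewrite Hag ?G //; lia.
      -- right; split; first lia; split; first lia.
         by rewrite Hag //; lia.
  + case: (ltnP dd t0) => Hc.
    * apply: (wit_sub (x0 := x0) (t := dd)); try lia.
      -- by move=> s Hs; rewrite Hag ?G //; lia.
      -- right; split; first lia; split; first lia.
         by rewrite G.
    * apply: (wit_sub (x0 := x0) (t := t0)); try lia.
      -- move=> s Hs; rewrite Hag ?G //; lia.
      -- right; split; first lia; split; first lia.
         case: (ltngtP t0 dd) Hc => // Htd _.
         ++ by rewrite Hag.
         ++ by rewrite Htd; apply: lt_trans Hlt _; rewrite -Htd.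
Qed.

Lemma per_mod {d} {T : orderType d} (x0 : T) y h per j :
  0 < per -> perP x0 y h per j -> forall q, h <= q -> q < j ->
  nth x0 y q = nth x0 y (h + (q - h) %% per).
Proof.
move=> Hper HP q Hq Hj.
have E : q - h = (q - h) %/ per * per + (q - h) %% per := divn_eq _ _.
have := per_exp HP (b := (q - h) %/ per) (q := h + (q - h) %% per).
move: E; move: ((q - h) %/ per * per) => D; move: ((q - h) %% per) => M E.
have -> : h + M + D = q by lia.
move=> -> //; lia.
Qed.

Record inv {d} {T : orderType d} (x0 : T) (y : seq T) (s : lst_state) : Prop := Inv {
  iv_j0 : 0 < st_j s;
  iv_jn : st_j s <= size y;
  iv_per : 0 < st_per s;
  iv_hi : st_h s <= st_i s;
  iv_ih : st_i s < st_h s + st_per s;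
  iv_a : exists a, 0 < a /\ st_j s = st_i s + a * st_per s;
  iv_P : perP x0 y (st_h s) (st_per s) (st_j s);
  iv_L : lynidx x0 y (st_h s) (st_per s);
  iv_pre : forall p m, p < st_h s -> st_h s <= m -> m < size y -> ~~ lyndon (sub y p m);
  iv_tab : forall m, m < st_j s -> st_lyns s m = longest_lyndon_suffix (take m.+1 y)
}.

Lemma inv_init {d} {T : orderType d} (x0 : T) (y : seq T) :
  0 < size y -> inv x0 y lst_init.
Proof.
move=> Hn; constructor => //=.
- by exists 1.
- by move=> q; lia.
- by move=> r; lia.
- move=> m; rewrite ltnS leqn0 => /eqP ->.
  rewrite (@lls_y_eq _ _ y 0 0) //.
  by apply: lyndon1; rewrite size_sub.
Qed.

Lemma inv_step {d} {T : orderType d} (x0 : T) (y : seq T) cmp s :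
  (forall a b, a < size y -> b < size y -> cmp a b =
     if (nth x0 y a < nth x0 y b)%O then Lt else if nth x0 y a == nth x0 y b then Eq else Gt) ->
  inv x0 y s -> st_j s < size y ->
  inv x0 y (lst_step cmp s) /\ st_j s + st_h s < st_j (lst_step cmp s) + st_h (lst_step cmp s).
Proof.
move=> Hcmp.
case: s => lyns per h i j [/= Hj0 Hjn Hper Hhi Hih [a [Ha Hja]] HP HL Hpre Htab] Hj.
have Hap : per <= a * per by rewrite leq_pmull.
have Hij : i < j by lia.
have Hpm := per_mod Hper HP.
set dd := i - h.
have Hdd : (j - h) %% per = dd.
  have -> : j - h = a * per + dd by lia.
  rewrite modnMDl modn_small //; lia.
rewrite /lst_step Hcmp //; last lia.
case: (ltgtP (nth x0 y j) (nth x0 y i)) => Hc.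
-
  set hh := j - (i - h).
  have Ehh : hh = h + a * per by lia.
  have Hag : forall s, hh + s < j -> nth x0 y (hh + s) = nth x0 y (h + s).
    move=> s Hs; rewrite Ehh addnAC; apply: (per_exp HP); lia.
  have Hpre' : forall p m, p < hh -> hh <= m -> m < size y -> ~~ lyndon (sub y p m).
    move=> p m Hp Hm Hmn; case: (ltnP p h) => Hph; first by apply: Hpre; lia.
    rewrite Ehh in Hp Hm.
    apply: (nonlyn (j := j) (a := a) Hper HP HL) => //; try lia.
    case: (ltnP m j) => Hmj; [left|right].
    + split; first lia.
      move=> s Hs; rewrite -Ehh; apply: Hag; lia.
    + exists dd; split; try lia.
      * move=> s Hs; rewrite -Ehh; apply: Hag; lia.
      * have -> : h + a * per + dd = j by lia.
        have -> : h + dd = i by lia.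
        exact: Hc.
  split; last by rewrite /=; lia.
  constructor => /=; try lia.
  + by exists 1; split => //; lia.
  + by move=> q; lia.
  + by move=> r; lia.
  + exact: Hpre'.
  + move=> m Hm; rewrite /upd; case: eqP => [->|Hne].
    * rewrite (@lls_y_eq _ _ y hh hh); first by rewrite subSnn.
      all: try lia.
      -- by apply: lyndon1; rewrite size_sub; lia.
      -- by move=> p' Hp'; apply: Hpre'; lia.
    * apply: Htab; lia.
-
  have HL' : lynidx x0 y h (j.+1 - h).
    move=> r Hr0 Hr.
    have E := divn_eq r per.
    have Hr0lt : r %% per < per := ltn_pmod _ Hper.
    move: (r %/ per) (r %% per) E Hr0lt => b r0 E Hr0lt.
    have F1 : forall x, r0 + x < per -> h + r + x < j ->
        nth x0 y (h + r + x) = nth x0 y (h + r0 + x).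
      move=> x Hx Hx'; have -> : h + r + x = (h + r0 + x) + b * per by lia.
      apply: (per_exp HP); lia.
    case: (posnP r0) => Hr00.
    + exists (j - h - r); split; first lia.
      * move=> s Hs; rewrite (Hpm (h + r + s)) ?(Hpm (h + s)); try lia.
        have -> : h + r + s - h = b * per + s by lia.
        by rewrite modnMDl; have -> : h + s - h = s by lia.
      * have -> : h + r + (j - h - r) = j by lia.
        rewrite (Hpm (h + (j - h - r))); try lia.
        have -> : h + (j - h - r) - h = j - h - r by lia.
        have -> : (j - h - r) %% per = dd.
          have Hx : (b * per + (j - h - r)) %% per = dd.
            rewrite -Hdd; congr (_ %% _); lia.
          by rewrite modnMDl in Hx.
        have -> : h + dd = i by lia.
        exact: Hc.
    + have [t0 [Ht0 Hag0 Hlt0]] := HL r0 Hr00 Hr0lt.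
      case: (ltnP (h + r + t0) j) => Hc2.
      * exists t0; split; first lia.
        -- move=> s Hs; rewrite F1; try lia; exact: Hag0.
        -- by rewrite F1 //; lia.
      * exists (j - (h + r)); split; first lia.
        -- move=> s Hs; rewrite F1 ?Hag0 //; lia.
        -- set t := j - (h + r).
           have Eit : i = h + r0 + t.
             have : (j - h) %% per = r0 + t.
               have -> : j - h = b * per + (r0 + t) by lia.
               rewrite modnMDl modn_small //; lia.
             rewrite Hdd /dd; lia.
           have -> : h + r + t = j by lia.
           case: (ltngtP t t0) => Htt.
           ++ by rewrite -(Hag0 t Htt) -Eit.
           ++ lia.
           ++ rewrite Htt; apply: lt_trans Hlt0 _; by rewrite -Htt -Eit.
  split; last by rewrite /=; lia.
  constructor => /=; try lia.
  + by exists 1; split => //; lia.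
  + by move=> q; lia.
  + exact: HL'.
  + exact: Hpre.
  + move=> m Hm; rewrite /upd; case: eqP => [->|Hne].
    * rewrite (@lls_y_eq _ _ y j h); first lia.
      all: try lia.
      -- have := lynidx_lyndon HL' _ _.
         have -> : (h + (j.+1 - h)).-1 = j by lia.
         by apply; lia.
      -- by move=> p' Hp'; apply: Hpre; lia.
    * apply: Htab; lia.
-
  set i' := h + (i - h + 1) %% per.
  have Hi' : (i' = i.+1 /\ i.+1 < h + per) \/ (i' = h /\ i.+1 = h + per).
    rewrite /i'; case: (ltngtP (i - h + 1) per) => H.
    + left; rewrite modn_small //; lia.
    + lia.
    + right; rewrite H modnn; lia.
  have Hshift : forall q, h <= q -> q <= i -> sub y (q + a * per) j = sub y q i.
    move=> q Hq Hqi; apply: (@eq_from_nth _ x0).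
      rewrite !size_sub; lia.
    move=> s; rewrite size_sub; last lia.
    move=> Hs; rewrite !nth_sub; try lia.
    case: (ltnP (q + s) i) => Hqs.
    + rewrite addnAC; apply: (per_exp HP); lia.
    + have -> : q + a * per + s = j by lia.
      have -> : q + s = i by lia.
      exact: Hc.
  split; last by rewrite /=; lia.
  constructor => /=; try lia.
  + case: Hi' => [[-> _]|[-> H]].
    * by exists a; split => //; lia.
    * by exists a.+1; split => //; rewrite mulSnr; lia.
  + move=> q Hq Hq'; case: (ltnP (q + per) j) => Hqj; first by apply: HP.
    have -> : q + per = j by lia.
    rewrite Hc (Hpm q); try lia.
    have -> : (q - h) %% per = dd.
      rewrite -Hdd -(modnDr (q - h)); congr (_ %% _); lia.
    congr nth; lia.
  + exact: HL.
  + exact: Hpre.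
  + move=> m Hm; rewrite /upd; case: eqP => [->|Hne]; last by apply: Htab; lia.
    rewrite Htab //.
    have [p [Hp Hly Hno HLLS]] := lls_y_spec (m := i) (ltn_trans Hij Hj).
    rewrite HLLS.
    have Hph : h <= p.
      rewrite leqNgt; apply/negP => Hph.
      by move: (Hpre p i Hph Hhi (ltn_trans Hij Hj)); rewrite Hly.
    rewrite (@lls_y_eq _ _ y j (p + a * per)); first lia.
    all: try lia.
    * by rewrite Hshift.
    * move=> p' Hp'.
      case: (ltnP p' h) => H1; first by apply: Hpre; lia.
      case: (ltnP p' (h + a * per)) => H2.
      -- apply: (nonlyn (j := j) (a := a) Hper HP HL) => //; try lia.
         left; split; first lia.
         move=> s Hs; case: (ltnP s dd) => Hsd.
         ++ rewrite addnAC; apply: (per_exp HP); lia.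
         ++ have -> : h + a * per + s = j by lia.
            have -> : h + s = i by lia.
            exact: Hc.
      -- have -> : p' = (p' - a * per) + a * per by lia.
         rewrite Hshift; try lia.
         apply: Hno; lia.
Qed.

Lemma first_halt (P : nat -> bool) N :
  (exists k, [/\ k <= N, P k & forall k', k' < k -> ~~ P k']) \/ (forall k, k <= N -> ~~ P k).
Proof.
elim: N => [|N [[k [Hk Pk Hf]]|IH]].
- case P0: (P 0); [left; exists 0; split => // | right => k; rewrite leqn0 => /eqP ->; by rewrite P0].
- by left; exists k; split => //; apply: leqW.
- case PN: (P N.+1).
  + left; exists N.+1; split => // k' Hk'; apply: IH; lia.
  + right => k; rewrite leq_eqVlt => /orP[/eqP ->|Hk]; first by rewrite PN.
    by apply: IH.
Qed.

Lemma run {d} {T : orderType d} (x0 : T) (y' : seq T) k :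
  let y := x0 :: y' in
  (forall k', k' < k -> ~~ lst_halted (size y) (lst_iter (letter_cmp y) k')) ->
  inv x0 y (lst_iter (letter_cmp y) k) /\
  k < st_j (lst_iter (letter_cmp y) k) + st_h (lst_iter (letter_cmp y) k).
Proof.
move=> y; elim: k => [|k IH] Hf.
  by split => //; apply: inv_init.
have [Hinv Hphi] : inv x0 y (lst_iter (letter_cmp y) k) /\
  k < st_j (lst_iter (letter_cmp y) k) + st_h (lst_iter (letter_cmp y) k).
  by apply: IH => k' Hk'; apply: Hf; lia.
have Hnh := Hf k (ltnSn k); rewrite /lst_halted -ltnNge in Hnh.
rewrite /lst_iter iterS -/(lst_iter _ k).
have [Hinv' Hphi'] := inv_step (cmp := letter_cmp y) (fun a b _ _ => erefl) Hinv Hnh.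
split => //; lia.
Qed.

Theorem proposition5 :
  exists c : nat,
  forall (d : Order.disp_t) (T : orderType d) (y : seq T),
    0 < size y ->
    exists k : nat,
      [/\ k <= c * size y,
          (forall k', k' < k -> ~~ lst_halted (size y) (lst_iter (letter_cmp y) k')),
          lst_halted (size y) (lst_iter (letter_cmp y) k) &
          forall j, j < size y ->
            st_lyns (lst_iter (letter_cmp y) k) j
            = longest_lyndon_suffix (take j.+1 y)].
Proof.
exists 2 => d T [|x0 y'] // _.
have [[k [Hk Hh Hf]]|Hnone] :=
  first_halt (fun k => lst_halted (size (x0 :: y')) (lst_iter (letter_cmp (x0 :: y')) k)) (2 * size (x0 :: y')).
- have [Hinv _] := run Hf.
  exists k; split => // j Hj.
  rewrite (iv_tab Hinv) //; move: Hh; rewrite /lst_halted /= leEnat => Hh; move: Hj => /= Hj; lia.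
- have [Hinv Hphi] := run (k := 2 * size (x0 :: y')) (fun k' Hk' => Hnone k' (ltnW Hk')).
  have := iv_hi Hinv; have := iv_jn Hinv; have := iv_a Hinv.
  case=> a [Ha E].
  have := iv_per Hinv; lia.
Qed.
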